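(* Let $k\ge 4$, $n=2k-1$, $\lambda\in\overline{\mathcal{U}}_{T_n}$, and let $Y=\mathrm{KN}(S_\lambda)$. Write the elements of $S_\lambda$ increasingly as $0=s_0<s_1<s_2<\cdots$ and let $z$ be the index with $s_z=n-2$. Then $$\sum_{i=2}^{z} h_{i,z+1}=k,$$ where $h_{i,j}$ denotes the hook length of the cell of $Y$ in row $i$ and column $j$.
   Context: A partition of $N$ into distinct parts is a sequence $\lambda=(\lambda_1<\dots<\lambda_t)$ of positive integers with sum $N$ and $t\ge 2$, identified with its set of parts. Missing parts: $\mathcal{M}_\lambda=\{1,\dots,\lambda_t\}\setminus\lambda$. $\lambda$ is refinable if two distinct missing parts sum to a part of $\lambda$, unrefinable otherwise; $\mathcal{U}_N$ is the set of unrefinable partitions of $N$. An element of $\mathcal{U}_N$ is maximal if its largest part is the maximum of the largest parts of elements of $\mathcal{U}_N$; $\widetilde{\mathcal{U}}_N$ is the set of these and $\overline{\mathcal{U}}_N=\{\lambda\in\widetilde{\mathcal{U}}_N:\#\mathcal{M}_\lambda=\lfloor\lambda_t/2\rfloor\}$. $T_n=n(n+1)/2$. For $\lambda\in\overline{\mathcal{U}}_{T_n}$ (with $n=2k-1$, $k\ge 4$) one knows $\lambda_t=2n-4$, $t=n-2$ and $n-2\notin\lambda$. $S_\lambda=\mathbb{N}_0\setminus\lambda$. The Keith–Nath transformation sends a set $S\subseteq\mathbb{N}_0$ with $0\in S$ and finite complement to the Young diagram $\mathrm{KN}(S)$ whose boundary is the lattice path that, starting at the origin, takes for $j=0,1,\dots,\max(\mathbb{N}_0\setminus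 S)$ an east step if $j\in S$ and a north step otherwise. Diagrams are in English convention (rows numbered top to bottom, columns left to right); hook length = (cells to the right in the row) + (cells below in the column) + 1. *)

(* Defs.v *)
From mathcomp Require Import all_boot.
Set Implicit Arguments. Unset Strict Implicit. Unset Printing Implicit Defensive.

(* A partition into distinct parts is represented by the strictly increasing
   list of its parts (identified with its set of parts). *)
Definition largest (lam : seq nat) : nat := last 0 lam.

Definition distinct_partition (N : nat) (lam : seq nat) : bool :=
  [&& sorted ltn lam, 0 \notin lam, sumn lam == N & 2 <= size lam].

Definition missing (lam : seq nat) : seq nat :=
  [seq x <- iota 1 (largest lam) | x \notin lam].

Definition refinable (lam : seq nat) : bool :=
  has (fun a => has (fun b => (a != b) && (a + b \in lam)) (missing lam))
      (missing lam).

Definition unrefinable (N : nat) (lam : seq nat) : bool :=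
  distinct_partition N lam && ~~ refinable lam.

Definition maximal_unref (N : nat) (lam : seq nat) : Prop :=
  unrefinable N lam /\
  forall mu : seq nat, unrefinable N mu -> largest mu <= largest lam.

Definition Ubar (N : nat) (lam : seq nat) : Prop :=
  maximal_unref N lam /\ size (missing lam) = (largest lam)./2.

Definition T (n : nat) : nat := (n * n.+1)./2.

Definition S_lam (lam : seq nat) : pred nat := fun x => x \notin lam.

(* the i-th element (0-indexed, increasing) of S_lam; the range
   [0, i + size lam] contains at least i+1 elements of S_lam *)
Definition Selem (lam : seq nat) (i : nat) : nat :=
  nth 0 [seq x <- iota 0 (i + size lam).+1 | S_lam lam x] i.

(* Keith--Nath: the boundary lattice path, as a list of steps for
   j = 0, ..., m (true = east step when j \in S, false = north step). *)
Definition KN_path (S : pred nat) (m : nat) : seq bool :=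
  [seq S j | j <- iota 0 m.+1].

Definition north_pos (p : seq bool) : seq nat :=
  [seq j <- iota 0 (size p) | ~~ nth false p j].

Definition nrows (p : seq bool) : nat := size (north_pos p).

(* Young diagram bounded by the path (English convention): row i (1-indexed,
   top to bottom) corresponds to the i-th north step counted from the end of
   the path; its length is the number of east steps preceding it. *)
Definition rowlen (p : seq bool) (i : nat) : nat :=
  if (1 <= i <= nrows p) then count id (take (nth 0 (rev (north_pos p)) i.-1) p)
  else 0.

Definition in_diagram (p : seq bool) (i j : nat) : bool :=
  (1 <= i <= nrows p) && (1 <= j <= rowlen p i).

Definition collen (p : seq bool) (j : nat) : nat :=
  count (fun i => in_diagram p i j) (iota 1 (nrows p)).

Definition hook (p : seq bool) (i j : nat) : nat :=
  (rowlen p i - j) + (collen p j - i) + 1.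

(* Y = KN(S_lam); max(N_0 \ S_lam) = largest lam *)
Definition KN_lam (lam : seq nat) : seq bool := KN_path (S_lam lam) (largest lam).

(* Main.v *)
Require Import Defs.
From mathcomp Require Import all_boot.
From mathcomp Require Import zify.
Set Implicit Arguments. Unset Strict Implicit. Unset Printing Implicit Defensive.


Lemma count_sum (T : Type) (a : pred T) s : count a s = \sum_(x <- s) a x.
Proof. by elim: s => [|x s IH]; rewrite ?big_nil ?big_cons //= IH. Qed.

Lemma rev_shift (F : nat -> nat) m h : h < m ->
  \sum_(m - h <= x < m) F x = \sum_(1 <= a < h.+1) F (m - a).
Proof.
elim: h => [|h IH] Hh; first by rewrite subn0 !big_geq.
rewrite big_ltn; last by lia.
have -> : (m - h.+1).+1 = m - h by lia.
rewrite big_nat_recr //= IH; last by lia.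
by rewrite addnC.
Qed.

Lemma split_sum (F : nat -> nat) m h : 2 * h < m ->
  \sum_(1 <= x < m) F x = \sum_(1 <= a < h.+1) F a
     + \sum_(h.+1 <= x < m - h) F x + \sum_(1 <= a < h.+1) F (m - a).
Proof.
move=> Hh.
rewrite (@big_cat_nat _ _ _ h.+1); [|lia|lia].
rewrite (@big_cat_nat _ _ _ (m - h) h.+1); [|lia|lia].
rewrite rev_shift; last lia.
exact: addnA.
Qed.

Lemma sum_all1 (f : nat -> nat) h : (forall a, 1 <= a <= h -> f a <= 1) ->
  \sum_(1 <= a < h.+1) f a = h -> forall a, 1 <= a <= h -> f a = 1.
Proof.
elim: h => [|h IH] Hf; first by move=> _ a; lia.
rewrite big_nat_recr //= => Hs.
have Hle : \sum_(1 <= a < h.+1) f a <= h.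
  have : \sum_(1 <= a < h.+1) f a <= \sum_(1 <= a < h.+1) 1.
    rewrite big_nat [X in _ <= X]big_nat; apply: leq_sum => a Ha; apply: Hf; lia.
  by rewrite sum_nat_const_nat; lia.
have Hfh := Hf h.+1.
have IH' := IH (fun a Ha => Hf a (ltac:(lia))).
move=> a Ha; case: (ltngtP a h.+1) => Ha'; [|lia|].
- apply: IH'; [|lia]. have : f h.+1 <= 1 by apply: Hfh; lia. lia.
- subst a; have : f h.+1 <= 1 by apply: Hfh; lia. lia.
Qed.

Lemma sum03 (F : nat -> nat) a b : (forall x, a <= x < b -> F x = 0 \/ 3 <= F x) ->
  \sum_(a <= x < b) F x = 0 \/ 3 <= \sum_(a <= x < b) F x.
Proof.
elim: b => [|b IH] HF; first by left; rewrite big_geq.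
case: (leqP a b) => Hab; last by left; rewrite big_geq.
have {}IH := IH (fun x Hx => HF x ltac:(lia)).
rewrite big_nat_recr //=; case: IH => [->|H1]; case: (HF b ltac:(lia)) => [->|H2]; lia.
Qed.

Lemma sum_range0 (F : nat -> nat) a b t : a <= b -> b <= t ->
  \sum_(a <= j < b) F j = \sum_(0 <= j < t) (if a <= j < b then F j else 0).
Proof.
move=> Hab Hbt.
rewrite (@big_cat_nat _ _ _ a 0 t) //; last by lia.
rewrite (@big_cat_nat _ _ _ b a t) //.
rewrite (@big1_seq _ _ _ _ (index_iota 0 a)); last first.
  move=> j /andP[_]; rewrite mem_index_iota => Hj; case: ifP => //; lia.
rewrite (@big1_seq _ _ _ _ (index_iota b t)); last first.
  move=> j /andP[_]; rewrite mem_index_iota => Hj; case: ifP => //; lia.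
rewrite /= add0n addn0.
apply: eq_big_nat => j Hj; case: ifP => //; lia.
Qed.


Definition dec (a b : nat) := b < a.

Lemma dec_tr : transitive dec.
Proof. rewrite /dec => a b c H1 H2; lia. Qed.

Lemma L1 (r : seq nat) y j : sorted dec r ->
  (y < nth 0 r j) = (j < count (fun x => y < x) r).
Proof.
elim: r j => [|x r IH] j /=; first by rewrite nth_nil.
rewrite (path_sortedE dec_tr) => /andP[Hall Hs].
case: (ltnP y x) => Hyx.
- case: j => [|j] /=; first by rewrite Hyx.
  by rewrite IH // add1n ltnS.
- have Hc : count (fun v => y < v) r = 0.
    apply/eqP; rewrite -leqn0 leqNgt -has_count; apply/hasPn => v Hv.
    move/allP: Hall => /(_ v Hv); rewrite /dec; lia.
  rewrite Hc add0n ltn0.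
  case: j => [|j] /=; first by lia.
  by rewrite IH // Hc ltn0.
Qed.

Lemma L2 (r : seq nat) j : sorted dec r -> j < size r ->
  count (fun v => v < nth 0 r j) r = size r - j.+1.
Proof.
elim: r j => [|x r IH] j //=.
rewrite (path_sortedE dec_tr) => /andP[Hall Hs].
case: j => [|j] /= Hj.
- rewrite ltnn add0n subn1 /=.
  by apply/eqP; rewrite -all_count; apply: sub_all Hall => v; rewrite /dec.
- have Hw : nth 0 r j < x.
    by move/allP: Hall; apply; rewrite mem_nth.
  rewrite ltnNge (ltnW Hw) add0n IH //.
Qed.

Lemma L3 (r : seq nat) x j : sorted dec (x :: r) -> j < size r -> nth 0 (x :: r) j.+1 < x.
Proof.
rewrite /= (path_sortedE dec_tr) => /andP[Hall Hs] Hj.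
by move/allP: Hall; apply; rewrite mem_nth.
Qed.

Lemma cnt_lt_succ (s : seq nat) x :
  count (fun v => v < x.+1) s = count (fun v => v < x) s + count (pred1 x) s.
Proof.
elim: s => [|v s IH] //=; rewrite IH.
case: (ltngtP v x) => H /=; try lia.
Qed.

Lemma C1 (s : seq nat) x : uniq s ->
  count (mem s) (iota 0 x) = count (fun v => v < x) s.
Proof.
move=> Hu; elim: x => [|x IH].
- by rewrite /=; apply/esym/eqP; rewrite -leqn0 leqNgt -has_count; apply/hasPn.
- rewrite -addn1 iotaD count_cat IH /= addn0 add0n addn1 cnt_lt_succ.
  by rewrite (count_uniq_mem _ Hu).
Qed.


Lemma sumn_iota1 j : 2 * sumn (iota 1 j) = j * j.+1.
Proof.
elim: j => [|j IH] //.
rewrite -[j.+1]addn1 iotaD sumn_cat /= addn0 mulnDr IH; lia.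
Qed.

Definition mu (n : nat) := iota 1 (n - 3) ++ [:: n.+1; 2 * n - 4].

Lemma mem_mu n x : 7 <= n -> (x \in mu n) = [|| (1 <= x < n - 2), x == n.+1 | x == 2 * n - 4].
Proof.
move=> Hn; rewrite /mu mem_cat mem_iota !inE.
have -> : 1 + (n - 3) = n - 2 by lia.
by [].
Qed.

Lemma mu_largest n : largest (mu n) = 2 * n - 4.
Proof. by rewrite /largest /mu last_cat. Qed.

Lemma mu_unref n : 7 <= n -> odd n -> unrefinable (T n) (mu n).
Proof.
move=> Hn Hodd; apply/andP; split.
- apply/and4P; split.
  + rewrite (sorted_pairwise ltn_trans) /mu pairwise_cat; apply/and3P; split.
    * apply/allrelP => x y; rewrite mem_iota !inE => Hx /orP[] /eqP ->; lia.
    * by rewrite -(sorted_pairwise ltn_trans) iota_ltn_sorted.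
    * rewrite /= !andbT; lia.
  + rewrite mem_mu //; lia.
  + rewrite /mu sumn_cat /= addn0 /T.
    have H2 := sumn_iota1 (n - 3).
    apply/eqP; rewrite -divn2.
    have Ho : n * n.+1 = 2 * ((n * n.+1) %/ 2).
      have := divn_eq (n * n.+1) 2.
      have -> : (n * n.+1) %% 2 = 0.
        have : 2 %| n * n.+1 by rewrite dvdn_mull // dvdn2 /= Hodd.
        by move/eqP.
      lia.
    nia.
  + rewrite /mu size_cat /=; lia.
- apply/hasPn => a; rewrite /missing mu_largest mem_filter mem_iota => /andP[Ha Ha'].
  apply/hasPn => b; rewrite mem_filter mem_iota => /andP[Hb Hb'].
  rewrite mem_mu // in Ha; rewrite mem_mu // in Hb.
  rewrite mem_mu //; apply/negP => /andP[/eqP Hab].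
  move: Ha Hb; rewrite !negb_or; move=> /and3P[H1 H2 H3] /and3P[H4 H5 H6].
  move=> /or3P[]; try move=> /eqP; lia.
Qed.

Lemma arith_even2 n h St R2 : 2*St = h*h.+1 -> 2*(St + 2*R2 + (2*h+2)) = n*n.+1 -> h = n - 3 -> 7 <= n -> 2 * R2 = n + 1.
Proof. move=> H1 H2 H3 H4; have [p Hp] : exists p, n = p + 7 by exists (n - 7); lia.
subst n h. have E : p + 7 - 3 = p + 4 by lia. rewrite E in H1. lia. Qed.
Lemma arith_odd2 n h St R : 2*St = h*h.+1 -> 2*(St + R + (2*h+1)) = n*n.+1 -> h = n - 2 -> 7 <= n -> R = 2.
Proof. move=> H1 H2 H3 H4; have [p Hp] : exists p, n = p + 7 by exists (n - 7); lia.
subst n h. have E : p + 7 - 2 = p + 5 by lia. rewrite E in H1. lia. Qed.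
Lemma arith_odd1 n h St R : 2*St = h*h.+1 -> 2*(St + R + (2*h+1)) = n*n.+1 -> n - 1 <= h -> 2 <= n -> False.
Proof. move=> H1 H2 H3 H4; have [p Hp] : exists p, n = p + 2 by exists (n - 2); lia.
have [d Hd] : exists d, h = p + 1 + d by exists (h - p - 1); lia.
subst n h. have := leq0n (p * d). have := leq0n (d * d). lia. Qed.
Lemma arith_even1 n h St R2 : 2*St = h*h.+1 -> 2*(St + 2*R2 + (2*h+2)) = n*n.+1 -> n - 2 <= h -> 7 <= n -> False.
Proof. move=> H1 H2 H3 H4; have [p Hp] : exists p, n = p + 2 by exists (n - 2); lia.
have [d Hd] : exists d, h = p + d by exists (h - p); lia.
subst n h. clear H3 H4. case: d H1 H2 => [|d] H1 H2; first by rewrite addn0 in H1; lia.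
have := leq0n (p * d). have := leq0n (d * d). lia. Qed.


Lemma rcons_ex (l : seq nat) : 0 < size l -> exists s, l = rcons s (largest l).
Proof. case: l => [|x l] //= _; exists (belast x l); exact: lastI. Qed.

Lemma structure n lam : 7 <= n -> odd n -> Ubar (T n) lam ->
  [/\ largest lam = 2 * n - 4, (n - 2) \notin lam,
      (forall a, 1 <= a <= n - 3 -> (2 * n - 4 - a \in lam) = (a \notin lam)) &
      2 * \sum_(1 <= a < n - 2) (a \notin lam) * (n - 2 - a) = n + 1].
Proof.
move=> Hn Hodd [[/andP[/and4P[Hs H0 /eqP Hsum Hsz] Hnr] Hmax] Hmiss].
have Hlow : 2 * n - 4 <= largest lam.
  by rewrite -(mu_largest n); apply: Hmax; apply: mu_unref.
move: Hmiss Hnr Hlow Hmax.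
move Em : (largest lam) => m Hmiss Hnr Hlow Hmax.
have [s Hl] : exists s, lam = rcons s m.
  by rewrite -Em; apply: rcons_ex; lia.
have Hsd : sorted dec (rev lam) by rewrite rev_sorted.
have Hrev : rev lam = m :: rev s by rewrite Hl rev_rcons.
have Hmem : m \in lam by rewrite Hl mem_rcons mem_head.
have Hle : forall x, x \in lam -> x <= m.
  move=> x; rewrite -mem_rev Hrev inE => /orP[/eqP -> //|Hx].
  move: Hsd; rewrite Hrev /= (path_sortedE dec_tr) => /andP[/allP Hall _].
  by have := Hall x Hx; rewrite /dec => /ltnW.
have Hu : uniq lam by apply: (sorted_uniq ltn_trans ltnn).
have Hfilt : [seq x <- iota 0 m.+1 | x \in lam] = lam.
  apply: (irr_sorted_eq ltn_trans ltnn).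
  - by apply: sorted_filter; [exact: ltn_trans| exact: iota_ltn_sorted].
  - exact: Hs.
  - move=> x; rewrite mem_filter mem_iota add0n ltnS.
    case Hx: (x \in lam) => //=; exact: Hle.
have Hsumover : forall F, \sum_(x <- lam) F x = \sum_(0 <= x < m.+1) (x \in lam) * F x.
  move=> F; rewrite -[in LHS]Hfilt big_filter big_mkcond /index_iota subn0 /=.
  by apply: eq_bigr => x _; case: (x \in lam); rewrite ?mul1n ?mul0n.
have Hm1 : 1 <= m by clear -Hlow Hn; lia.
have Hmc : \sum_(1 <= x < m) (x \notin lam) = m %/ 2.
  rewrite divn2 -Hmiss /missing Em size_filter count_sum.
  rewrite (_ : iota 1 m = index_iota 1 m.+1); last by rewrite /index_iota subSS subn0.
  by rewrite big_nat_recr //= Hmem addn0.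
have Hpair : forall a, 1 <= a < m -> a + a != m -> (a \notin lam) + (m - a \notin lam) <= 1.
  move=> a Ha Haa.
  have : ~~ ((a \notin lam) && (m - a \notin lam)).
    apply/negP => /andP[Hq1 Hq2].
    move/hasPn: Hnr => Hnr.
    have Ha_in : a \in missing lam by rewrite /missing mem_filter Hq1 mem_iota Em; clear -Ha; lia.
    have Hb_in : m - a \in missing lam by rewrite /missing mem_filter Hq2 mem_iota Em; clear -Ha; lia.
    move/hasPn: (Hnr a Ha_in) => /(_ _ Hb_in).
    rewrite subnKC; last by clear -Ha; lia.
    rewrite Hmem andbT negbK => /eqP Hab; move/eqP: Haa; clear -Hab Ha; lia.
  by case: (a \in lam); case: (m - a \in lam).
have [h Hh] : exists h, m = 2 * h + 1 \/ m = 2 * h + 2.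
  exists ((m - 1) %/ 2); clear -Hm1; lia.
have H2h : 2 * h < m by clear -Hh; lia.
have Hmc2 : \sum_(1 <= a < h.+1) ((a \notin lam) + (m - a \notin lam))
    + \sum_(h.+1 <= x < m - h) (x \notin lam) = m %/ 2.
  by rewrite -Hmc (split_sum _ H2h) addnAC big_split.
have Hmidle : \sum_(h.+1 <= x < m - h) (x \notin lam) <= m - h - h.+1.
  have : \sum_(h.+1 <= x < m - h) (x \notin lam) <= \sum_(h.+1 <= x < m - h) 1.
    by apply: leq_sum => x _; case: (x \in lam).
  by rewrite sum_nat_const_nat muln1.
have Hpl : \sum_(1 <= a < h.+1) ((a \notin lam) + (m - a \notin lam)) <= h.
  have : \sum_(1 <= a < h.+1) ((a \notin lam) + (m - a \notin lam)) <= \sum_(1 <= a < h.+1) 1.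
    rewrite big_nat [X in _ <= X]big_nat; apply: leq_sum => a Ha; apply: Hpair; clear -Ha H2h; lia.
  by rewrite sum_nat_const_nat muln1 subn1.
have Hpe : \sum_(1 <= a < h.+1) ((a \notin lam) + (m - a \notin lam)) = h by clear -Hmc2 Hmidle Hpl Hh; lia.
have Hmide : \sum_(h.+1 <= x < m - h) (x \notin lam) = m - h - h.+1 by clear -Hmc2 Hmidle Hpl Hh; lia.
have Hp1 : forall a, 1 <= a <= h -> (a \notin lam) + (m - a \notin lam) = 1.
  apply: (sum_all1 (f := fun a => (a \notin lam) + (m - a \notin lam))) Hpe.
  move=> a Ha; apply: Hpair; clear -Ha H2h; lia.
have Hpr : forall a, 1 <= a <= h -> (m - a \in lam) = (a \notin lam).
  by move=> a Ha; have := Hp1 a Ha; case: (a \in lam); case: (m - a \in lam).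
have Hs2 : T n = \sum_(1 <= x < m) (x \in lam) * x + m.
  rewrite -Hsum sumnE Hsumover big_ltn // big_nat_recr //= Hmem muln0 add0n mul1n.
  by [].
rewrite (split_sum _ H2h) in Hs2.
have Hmidnot : m = 2 * h + 2 -> h.+1 \notin lam.
  move=> Hm'; move: Hmide; have -> : m - h = h.+2 by clear -Hm'; lia.
  by rewrite big_nat1; case: (h.+1 \in lam) => //=; clear -Hm'; lia.
have Hmid0 : \sum_(h.+1 <= x < m - h) (x \in lam) * x = 0.
  case: Hh => Hm'.
  - by rewrite big_geq //; clear -Hm'; lia.
  - have -> : m - h = h.+2 by clear -Hm'; lia.
    by rewrite big_nat1; move: (Hmidnot Hm'); case: (h.+1 \in lam).
have Hupper : \sum_(1 <= a < h.+1) (m - a \in lam) * (m - a)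
            = \sum_(1 <= a < h.+1) (a \notin lam) * (m - a).
  by apply: eq_big_nat => a Ha; rewrite Hpr //; clear -Ha; lia.
have Hcomb : \sum_(1 <= a < h.+1) (a \in lam) * a + \sum_(1 <= a < h.+1) (a \notin lam) * (m - a)
   = \sum_(1 <= a < h.+1) a + \sum_(1 <= a < h.+1) (a \notin lam) * (m - 2 * a).
  rewrite -!big_split; apply: eq_big_nat => a Ha /=; case: (a \in lam) => /=; clear -Ha H2h; lia.
have Htri : 2 * \sum_(1 <= a < h.+1) a = h * h.+1.
  by rewrite /index_iota subSS subn0 -sumnE sumn_iota1.
have HT : 2 * T n = n * n.+1.
  by rewrite /T mul2n halfK oddM /= andbN subn0.
rewrite Hmid0 addn0 Hupper Hcomb in Hs2.
set R := \sum_(1 <= a < h.+1) (a \notin lam) * (m - 2 * a) in Hs2.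
set St := \sum_(1 <= a < h.+1) a in Hs2 Htri.
case: Hh => Hm'.
-
  exfalso.
  have Hhn : n - 2 <= h by clear -Hm' Hlow; lia.
  case: (ltnP h (n - 1)) => Hh2; last first.
    apply: (@arith_odd1 n h St R Htri); [|clear -Hh2; lia|clear -Hn; lia]. by rewrite -HT Hs2 Hm'.
  have Hh3 : h = n - 2 by clear -Hh2 Hhn; lia.
  have HR2 : R = 2.
    apply: (@arith_odd2 n h St R Htri); [|clear -Hh3; lia|clear -Hn; lia]. by rewrite -HT Hs2 Hm'.
  move: HR2; rewrite /R big_nat_recr /=; last by clear -Hh3 Hn; lia.
  have -> : m - 2 * h = 1 by clear -Hm'; lia.
  have := @sum03 (fun a => (a \notin lam) * (m - 2 * a)) 1 h.
  case.
  + move=> a Ha; case: (a \in lam) => /=; [left; clear; lia| right; clear -Ha Hm'; lia].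
  + move=> ->; case: (h \in lam) => /=; clear; lia.
  + case: (h \in lam) => /=; clear; lia.
- have Hhn : n - 3 <= h by clear -Hm' Hlow; lia.
  pose R2 := \sum_(1 <= a < h.+1) (a \notin lam) * (h.+1 - a).
  have HR : R = 2 * R2.
    rewrite /R /R2 big_distrr; apply: eq_big_nat => a Ha /=; case: (a \in lam) => /=; clear -Ha Hm'; lia.
  have HT2 : 2 * (St + 2 * R2 + (2 * h + 2)) = n * n.+1 by rewrite -HT Hs2 Hm' HR.
  case: (ltnP h (n - 2)) => Hh2; last first.
    exfalso; apply: (@arith_even1 n h St R2 Htri HT2); clear -Hh2 Hn; lia.
  have Hh3 : h = n - 3 by clear -Hh2 Hhn; lia.
  have Hh1 : h.+1 = n - 2 by clear -Hh3 Hn; lia.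
  split.
  + clear -Hm' Hh3 Hn; lia.
  + rewrite -Hh1; exact: Hmidnot.
  + move=> a Ha; have -> : 2 * n - 4 = m by clear -Hm' Hh3 Hn; lia.
    apply: Hpr; clear -Ha Hh3 Hn; lia.
  + have -> : \sum_(1 <= a < n - 2) (a \notin lam) * (n - 2 - a) = R2.
      by rewrite /R2 Hh1.
    apply: (@arith_even2 n h St R2 Htri HT2); clear -Hh3 Hn; lia.
Qed.


Definition Ecount (lam : seq nat) x := count (fun j => j \notin lam) (iota 0 x).

Lemma Ecount_add lam a b :
  Ecount lam (a + b) = Ecount lam a + count (fun j => j \notin lam) (iota a b).
Proof. by rewrite /Ecount iotaD count_cat. Qed.

Lemma Ecount_C1 lam x : uniq lam -> Ecount lam x + count (fun v => v < x) lam = x.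
Proof.
move=> Hu; rewrite -C1 // addnC /Ecount -[X in _ = X](size_iota 0 x).
by rewrite -(count_predC (mem lam)).
Qed.

Lemma Ecount_S lam y : Ecount lam y.+1 = Ecount lam y + (y \notin lam).
Proof. by rewrite -addn1 Ecount_add /= addn0. Qed.

Lemma Ecount_mono lam a b : a <= b -> Ecount lam a <= Ecount lam b.
Proof. by move=> Hab; rewrite -(subnKC Hab) Ecount_add leq_addr. Qed.

Lemma Selem_E lam z y : 0 < y -> Selem lam z = y -> Ecount lam y = z.
Proof.
rewrite /Selem => Hy0 Hz.
set N := (z + size lam).+1 in Hz.
set F := [seq x <- iota 0 N | S_lam lam x] in Hz.
have Hzs : z < size F.
  rewrite ltnNge; apply/negP => Hge; move: Hz; rewrite nth_default //; lia.
have HyF : y \in F by rewrite -Hz mem_nth.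
move: (HyF); rewrite mem_filter mem_iota => /andP[Hyl HyN].
have HF : F = [seq x <- iota 0 y | S_lam lam x] ++ y :: [seq x <- iota y.+1 (N - y.+1) | S_lam lam x].
  rewrite /F (_ : N = y + (N - y.+1).+1); last by lia.
  rewrite iotaD filter_cat /= Hyl add0n; do 2 f_equal.
  by have -> : y + (N - y.+1).+1 - y.+1 = N - y.+1 by lia.
have Hu : uniq F by rewrite filter_uniq // iota_uniq.
have := index_uniq 0 Hzs Hu; rewrite Hz HF index_cat.
have -> : (y \in [seq x <- iota 0 y | S_lam lam x]) = false.
  by rewrite mem_filter mem_iota add0n ltnn !andbF.
by rewrite index_head addn0 size_filter => <-.
Qed.


Theorem proposition3p10 (k n : nat) (lam : seq nat) (z : nat) :
  4 <= k -> n = 2 * k - 1 -> Ubar (T n) lam -> Selem lam z = n - 2 ->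
  \sum_(2 <= i < z.+1) hook (KN_lam lam) i z.+1 = k.
Proof.
move=> Hk Hnk HU Hz.
have Hn : 7 <= n by clear -Hk Hnk; lia.
have Hodd : odd n.
  have -> : n = (k - 1).*2.+1 by rewrite -mul2n; clear -Hk Hnk; lia.
  by rewrite /= odd_double.
have [Hm Hy Hpr Hkey] := structure Hn Hodd HU.
case: HU => [[/andP[/and4P[Hs H0 _ Hsz] _] _] Hmiss].
move: Hmiss Hm; move Em : (largest lam) => m Hmiss Hm.
have Hz' := Selem_E (ltac:(clear -Hn; lia) : 0 < n - 2) Hz.
move: Hy Hkey Hz' Hpr; set y := n - 2 => Hy Hkey Hz' Hpr.
have Hmy : m = 2 * y by rewrite /y; clear -Hm Hn; lia.
have Hy3 : 5 <= y by rewrite /y; clear -Hn; lia.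
have Hkey' : \sum_(1 <= a < y) (a \notin lam) * (y - a) = k.
  by move: Hkey; rewrite /y; clear -Hnk Hk; lia.
have Hpr' : forall a, 1 <= a <= y - 1 -> (m - a \in lam) = (a \notin lam).
  by move=> a Ha; rewrite Hm; apply: Hpr; move: Ha; rewrite /y; clear; lia.
clear Hpr Hkey Hz.
have [s Hl] : exists s, lam = rcons s m.
  by rewrite -Em; apply: rcons_ex; clear -Hsz; lia.
have Hsd : sorted dec (rev lam) by rewrite rev_sorted.
have Hrev : rev lam = m :: rev s by rewrite Hl rev_rcons.
have Hmem : m \in lam by rewrite Hl mem_rcons mem_head.
have Hle : forall x, x \in lam -> x <= m.
  move=> x; rewrite -mem_rev Hrev inE => /orP[/eqP -> //|Hx].
  move: Hsd; rewrite Hrev /= (path_sortedE dec_tr) => /andP[/allP Hall _].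
  by have := Hall x Hx; rewrite /dec => /ltnW.
have Hu : uniq lam by apply: (sorted_uniq ltn_trans ltnn).
have Hfilt : [seq x <- iota 0 m.+1 | x \in lam] = lam.
  apply: (irr_sorted_eq ltn_trans ltnn).
  - by apply: sorted_filter; [exact: ltn_trans| exact: iota_ltn_sorted].
  - exact: Hs.
  - move=> x; rewrite mem_filter mem_iota add0n ltnS.
    case Hx: (x \in lam) => //=; exact: Hle.
have Hsumover : forall F, \sum_(x <- lam) F x = \sum_(0 <= x < m.+1) (x \in lam) * F x.
  move=> F; rewrite -[in LHS]Hfilt big_filter big_mkcond /index_iota subn0 /=.
  by apply: eq_bigr => x _; case: (x \in lam); rewrite ?mul1n ?mul0n.
have Hp : KN_lam lam = [seq j \notin lam | j <- iota 0 m.+1] by rewrite /KN_lam /KN_path Em.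
move: Hp; set p := KN_lam lam => Hp.
set r := rev lam.
set t := size lam.
have Hsr : size r = t by rewrite size_rev.
have Hnp : north_pos p = lam.
  rewrite /north_pos Hp size_map size_iota -[RHS]Hfilt.
  apply: eq_in_filter => j; rewrite mem_iota add0n => Hj.
  by rewrite (nth_map 0) ?size_iota // nth_iota // add0n negbK.
have Hnr : nrows p = t by rewrite /nrows Hnp.
have Hrow : forall i, 1 <= i <= t -> rowlen p i = Ecount lam (nth 0 r i.-1).
  move=> i Hi; rewrite /rowlen Hnr Hi Hnp -/r.
  have Hxin : nth 0 r i.-1 \in lam.
    by rewrite -mem_rev; apply: mem_nth; rewrite Hsr; clear -Hi; lia.
  have Hxm := Hle _ Hxin.
  rewrite Hp -map_take take_iota count_map.
  have -> : minn (nth 0 r i.-1) m.+1 = nth 0 r i.-1 by apply/minn_idPl; clear -Hxm; lia.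
  by [].
have Hcnt : forall j, j < t -> count (fun v => v < nth 0 r j) lam = t - j.+1.
  by move=> j Hj; rewrite -count_rev -/r L2 ?Hsr.
have Hrowv : forall j, j < t -> Ecount lam (nth 0 r j) = nth 0 r j - (t - j.+1).
  by move=> j Hj; have := Ecount_C1 (nth 0 r j) Hu; rewrite Hcnt //; clear; lia.
have HEy1 : Ecount lam y.+1 = z.+1 by rewrite Ecount_S Hz' Hy addn1.
have Hbig : forall x, y < x -> z.+1 <= Ecount lam x.
  by move=> x Hx; rewrite -HEy1; apply: Ecount_mono.
have Hsmall : forall x, x <= y -> Ecount lam x <= z.
  by move=> x Hx; rewrite -Hz'; apply: Ecount_mono.
have Hcol : collen p z.+1 = count (fun v => y < v) lam.
  rewrite /collen Hnr.
  have -> : count (fun i => in_diagram p i z.+1) (iota 1 t)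
          = count (fun i => y < nth 0 r i.-1) (iota 1 t).
    apply: eq_in_count => i; rewrite mem_iota => Hi.
    have Hi' : 1 <= i <= t by clear -Hi; lia.
    rewrite /in_diagram Hnr Hi' /= Hrow //.
    case: (ltnP y (nth 0 r i.-1)) => Hx.
    - by rewrite Hbig.
    - apply/negbTE; rewrite -ltnNge ltnS; exact: Hsmall.
  rewrite -(count_rev _ lam) -/r.
  have -> : iota 1 t = map (addn 1) (iota 0 t) by rewrite -iotaDl.
  rewrite count_map -[in RHS](mkseq_nth 0 r) /mkseq count_map Hsr.
  by apply: eq_count => j.
have Hzval : z = 1 + \sum_(1 <= a < y) (a \notin lam).
  rewrite -Hz' /Ecount count_sum (_ : iota 0 y = index_iota 0 y); last by rewrite /index_iota subn0.
  rewrite [in LHS]big_ltn ?H0 //; clear -Hy3; lia.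
have HA : \sum_(0 <= x < m.+1) (x \in lam) * (y < x)
   = \sum_(0 <= x < y.+1) (x \in lam) * (y < x) + \sum_(y.+1 <= x < m) (x \in lam) * (y < x)
     + (m \in lam) * (y < m).
  rewrite (@big_cat_nat _ _ _ y.+1 0 m.+1) ?big_nat_recr //; try (clear -Hmy Hy3; lia).
  exact: addnA.
have HB : \sum_(0 <= x < y.+1) (x \in lam) * (y < x) = 0.
  rewrite big_nat; apply: big1 => x Hx.
  have -> : (y < x) = false by clear -Hx; lia.
  by rewrite muln0.
have HC : \sum_(y.+1 <= x < m) (x \in lam) * (y < x) = \sum_(1 <= a < y) (a \notin lam).
  have -> : \sum_(y.+1 <= x < m) (x \in lam) * (y < x) = \sum_(y.+1 <= x < m) (x \in lam).
    apply: eq_big_nat => x Hx; have -> : (y < x) = true by clear -Hx; lia.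
    by rewrite muln1.
  have -> : y.+1 = m - (y - 1) by clear -Hmy Hy3; lia.
  rewrite rev_shift; last by clear -Hmy Hy3; lia.
  have -> : (y - 1).+1 = y by clear -Hy3; lia.
  apply: eq_big_nat => a Ha; rewrite Hpr' //; clear -Ha; lia.
have Hzz : count (fun v => y < v) lam = z.
  rewrite count_sum Hsumover HA HB HC Hmem Hzval.
  have -> : (y < m) = true by clear -Hmy Hy3; lia.
  by rewrite add0n muln1 addnC.
have Ht : t = y.
  have H1 := Ecount_C1 m.+1 Hu.
  have Hall : count (fun v => v < m.+1) lam = t.
    apply/eqP; rewrite -all_count; apply/allP => v Hv; rewrite ltnS; exact: Hle.
  have Hmc : count (fun j => j \notin lam) (iota 1 m) = y.
    by rewrite -[y]doubleK -mul2n -Hmy -Hmiss /missing Em size_filter.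
  have H2 : Ecount lam m.+1 = 1 + y.
    by rewrite -addn1 addnC Ecount_add /Ecount /= H0 Hmc.
  by rewrite Hall H2 in H1; clear -H1 Hmy; lia.
have Hzt : z <= t by rewrite -Hzz count_size.
have Hhook : forall i, 2 <= i <= z -> hook p i z.+1 = nth 0 r i.-1 - y.
  move=> i Hi.
  have Hit : 1 <= i <= t by clear -Hi Hzt; lia.
  have Hx : y < nth 0 r i.-1.
    by rewrite (L1 _ _ Hsd) -/r count_rev Hzz; clear -Hi; lia.
  have E1 := Hrowv i.-1 (ltac:(clear -Hit; lia)).
  have E2 := Hbig _ Hx.
  rewrite /hook Hrow // Hcol Hzz.
  move: E1 E2; rewrite Ht => E1 E2.
  rewrite E1; rewrite E1 in E2.
  move: E2; move: (nth 0 r i.-1) => x E2.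
  clear -E2 Hi Hit Ht; lia.
have -> : \sum_(2 <= i < z.+1) hook p i z.+1 = \sum_(2 <= i < z.+1) (nth 0 r i.-1 - y).
  by apply: eq_big_nat => i Hi; apply: Hhook; clear -Hi; lia.
rewrite big_add1 /=.
rewrite (@sum_range0 _ 1 z t); [|clear -Hzval; lia|exact: Hzt].
have -> : \sum_(0 <= j < t) (if 1 <= j < z then nth 0 r j - y else 0)
        = \sum_(x <- r | (y < x) && (x < m)) (x - y).
  rewrite [in RHS](big_nth 0) Hsr [in RHS]big_mkcond; apply: eq_big_nat => j Hj.
  have -> : (y < nth 0 r j) = (j < z) by rewrite (L1 _ _ Hsd) -/r count_rev Hzz.
  case: j Hj => [|j] Hj.
  - by rewrite /r Hrev /= ltnn andbF.
  - have -> : (nth 0 r j.+1 < m) = true.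
      rewrite /r Hrev; apply: (@L3 (rev s) m j); first by rewrite -Hrev.
      by move: Hsr; rewrite /r Hrev /= => Hsr'; clear -Hsr' Hj; lia.
    by rewrite andbT.
rewrite /r big_rev big_mkcond Hsumover.
have -> : \sum_(0 <= x < m.+1) (x \in lam) * (if (y < x) && (x < m) then x - y else 0)
        = \sum_(0 <= x < m.+1) (if y.+1 <= x < m then (x \in lam) * (x - y) else 0).
  by apply: eq_big_nat => x Hx; case: ifP; rewrite ?muln0.
rewrite -sum_range0; [|clear -Hmy Hy3; lia|clear; lia].
have -> : y.+1 = m - (y - 1) by clear -Hmy Hy3; lia.
rewrite rev_shift; last by clear -Hmy Hy3; lia.
have -> : (y - 1).+1 = y by clear -Hy3; lia.
rewrite -Hkey'; apply: eq_big_nat => a Ha; rewrite Hpr'; last by clear -Ha; lia.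
congr (_ * _); clear -Ha Hmy; lia.
Qed.
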